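(* For real $0\le x<\pi$ and every integer $r\ge2$, $$\log\mathcal C_r\left(\frac x{2\pi}\right)=\left(\frac x{2\pi}\right)^{r-1}\left(\log\left(\cos\frac x2\right)+(r-1)\sum_{n=1}^\infty\frac{\lambda(2n)}{n(2n+r-1)}\left(\frac x{\pi}\right)^{2n}\right).$$
   Context: For an integer $r\ge2$ let $P_r(y)=(1-y)\exp\left(y+\frac{y^2}{2}+\cdots+\frac{y^r}{r}\right)$. The multiple cosine function of Kurokawa–Koyama of order $r\ge2$ is $\mathcal C_r(x)=\prod_{n\ge1,\ n\text{ odd}}\left\{P_r\left(\frac{x}{n/2}\right)P_r\left(-\frac{x}{n/2}\right)^{(-1)^{r-1}}\right\}^{(n/2)^{r-1}}$, interpreted as $\mathcal C_r(x)=\exp\Big(\sum_{n\ge1,\,n\text{ odd}}(n/2)^{r-1}\big[\operatorname{Log}P_r(2x/n)+(-1)^{r-1}\operatorname{Log}P_r(-2x/n)\big]\Big)$, where $\operatorname{Log}P_r(y):=\operatorname{Log}(1-y)+y+\frac{y^2}{2}+\cdots+\frac{y^r}{r}$ with $\operatorname{Log}$ the principal branch. The series converges and defines a holomorphic function on $D=\mathbb C\setminus\big((-\infty,-\tfrac12]\cup[\tfrac12,\infty)\big)$, positive on $(-\tfrac12,\tfrac12)$; $\log\mathcal C_r(x)$ denotes the exponent above (the real logarithm for real $|x|<\tfrac12$). $\lambda(s)=\sum_{n=0}^\infty\frac1{(2n+1)^s}=(1-2^{-s})\zeta(s)$ is the Dirichlet lambda function. *)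

(* Defs.v *)
From Stdlib Require Import Reals.
From Coquelicot Require Import Coquelicot.
Open Scope R_scope.

(* Log P_r(y) = Log(1-y) + y + y^2/2 + ... + y^r/r  (real y < 1, principal log = ln) *)
Definition LogP (r : nat) (y : R) : R :=
  ln (1 - y) + sum_f_R0 (fun k => y ^ (k + 1) / INR (k + 1)) (r - 1).

Definition logC (r : nat) (x : R) : R :=
  Series (fun k : nat =>
    let n := INR (2 * k + 1) in
    (n / 2) ^ (r - 1) *
      (LogP r (2 * x / n) + (-1) ^ (r - 1) * LogP r (- (2 * x / n)))).

Definition dlambda (s : nat) : R :=
  Series (fun m : nat => / (INR (2 * m + 1)) ^ s).

(* Main.v *)
Require Import Defs.
From Stdlib Require Import Reals Lra Lia ZArith.
From Coquelicot Require Import Coquelicot.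
Open Scope R_scope.

Lemma series_lim (a : nat -> R) (l : R) :
  is_series a l <-> is_lim_seq (sum_n a) l.
Proof. split; intro H; exact H. Qed.

Lemma sum_n_nonneg (a : nat -> R) N : (forall n, 0 <= a n) -> 0 <= sum_n a N.
Proof.
  intros H; induction N. rewrite sum_O; auto.
  rewrite sum_Sn. unfold plus; simpl. specialize (H (S N)). lra.
Qed.

Lemma sum_n_le_series (a : nat -> R) l N :
  (forall n, 0 <= a n) -> is_series a l -> sum_n a N <= l.
Proof.
  intros Hp H. apply series_lim in H.
  apply (is_lim_seq_incr_compare (sum_n a) l H).
  intros n. rewrite sum_Sn. unfold plus; simpl. specialize (Hp (S n)). lra.
Qed.

Lemma term_le_series (a : nat -> R) l N :
  (forall n, 0 <= a n) -> is_series a l -> a N <= l.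
Proof.
  intros Hp H. eapply Rle_trans; [|apply (sum_n_le_series a l N Hp H)].
  destruct N. rewrite sum_O; lra. rewrite sum_Sn. unfold plus; simpl.
  pose proof (sum_n_nonneg a N Hp). lra.
Qed.

Lemma ex_series_bounded (a : nat -> R) M :
  (forall n, 0 <= a n) -> (forall N, sum_n a N <= M) -> ex_series a.
Proof.
  intros Hp HM.
  destruct (ex_finite_lim_seq_incr (sum_n a) M) as [l Hl].
  - intros n. rewrite sum_Sn. unfold plus; simpl. specialize (Hp (S n)). lra.
  - exact HM.
  - exists l. apply series_lim. exact Hl.
Qed.

Lemma Series_nonneg (a : nat -> R) : (forall n, 0 <= a n) -> 0 <= Series a.
Proof.
  intros H. unfold Series.
  assert (Hl := Lim_seq_le_loc (fun _ => 0) (sum_n a)).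
  rewrite Lim_seq_const in Hl.
  destruct (Lim_seq (sum_n a)) as [l| |]; simpl in *; try lra.
  all: try (apply Hl; exists O; intros n _; apply sum_n_nonneg; auto).
Qed.

Lemma Series_sum_n (f : nat -> nat -> R) K :
  (forall i, ex_series (f i)) ->
  ex_series (fun m => sum_n (fun i => f i m) K) /\
  Series (fun m => sum_n (fun i => f i m) K) = sum_n (fun i => Series (f i)) K.
Proof.
  intros H. induction K.
  - split.
    + eapply ex_series_ext; [|apply (H O)]. intros n; rewrite sum_O; auto.
    + rewrite sum_O. apply Series_ext. intros n; rewrite sum_O; auto.
  - destruct IHK as [IH1 IH2]. split.
    + eapply ex_series_ext.
      2: apply (ex_series_plus _ _ IH1 (H (S K))).
      intros n; rewrite sum_Sn; reflexivity.
    + rewrite sum_Sn. unfold plus; simpl. rewrite <- IH2.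
      rewrite <- Series_plus; auto. apply Series_ext. intros n; rewrite sum_Sn; reflexivity.
Qed.

Lemma swap_series (a : nat -> nat -> R) (C : nat -> R) (T : R) :
  (forall k m, 0 <= a k m) ->
  (forall m, is_series (fun k => a k m) (C m)) ->
  is_series C T ->
  (forall k, ex_series (a k)) /\ is_series (fun k => Series (a k)) T.
Proof.
  intros Hp Hc HT.
  assert (HC0 : forall m, 0 <= C m).
  { intros m. eapply Rle_trans; [apply (Hp O m)|]. apply (term_le_series (fun k => a k m)); auto. }
  assert (Hak : forall k m, a k m <= C m).
  { intros k m. apply (term_le_series (fun k => a k m)); auto. }
  assert (Hex : forall k, ex_series (a k)).
  { intros k. apply (ex_series_bounded _ T). auto.
    intros N. eapply Rle_trans; [|apply (sum_n_le_series C T N HC0 HT)].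
    rewrite !sum_n_Reals. apply sum_Rle. intros; auto. }
  split; auto.
  assert (HR0 : forall k, 0 <= Series (a k)).
  { intros k. apply Series_nonneg. auto. }
  assert (HexC : ex_series C) by (exists T; auto).
  assert (HRb : forall K, sum_n (fun k => Series (a k)) K <= T).
  { intros K. destruct (Series_sum_n a K Hex) as [E1 E2]. rewrite <- E2.
    rewrite <- (is_series_unique C T HT). apply Series_le; auto.
    intros n; split. apply sum_n_nonneg; auto.
    apply (sum_n_le_series (fun k => a k n)); auto. }
  assert (HexR : ex_series (fun k => Series (a k))) by (apply (ex_series_bounded _ T); auto).
  destruct HexR as [U HU].
  assert (U <= T).
  { apply series_lim in HU. apply series_lim in HT.
    specialize (is_lim_seq_le (sum_n (fun k => Series (a k))) (fun _ => T) U T HRb HU (is_lim_seq_const T)).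
    simpl; auto. }
  assert (T <= U).
  { assert (HCb : forall M, sum_n C M <= U).
    { intros M.
      destruct (Series_sum_n (fun m k => a k m) M) as [E1 E2].
      { intros m. exists (C m). auto. }
      rewrite (sum_n_ext _ (fun i => Series (fun k => a k i))).
      2:{ intros n. symmetry. apply is_series_unique. auto. }
      rewrite <- E2. rewrite <- (is_series_unique _ U HU). apply Series_le.
      intros n; split. apply sum_n_nonneg; auto.
      apply (sum_n_le_series (a n)); auto. apply Series_correct; auto.
      exists U; auto. }
    apply series_lim in HT.
    specialize (is_lim_seq_le (sum_n C) (fun _ => U) T U HCb HT (is_lim_seq_const U)).
    simpl; auto. }
  replace T with U by lra. exact HU.
Qed.

Lemma pair_series (a : nat -> R) l :
  is_series a l -> is_series (fun k => a (2*k)%nat + a (2*k+1)%nat) l.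
Proof.
  intros H. apply series_lim in H. apply series_lim.
  assert (E : forall N, sum_n (fun k => a (2*k)%nat + a (2*k+1)%nat) N = sum_n a (2*N+1)).
  { induction N. rewrite sum_O. simpl. rewrite sum_Sn, sum_O. reflexivity.
    rewrite sum_Sn, IHN. replace (2 * S N + 1)%nat with (S (S (2*N+1))) by lia.
    rewrite (sum_Sn a (S (2*N+1))), (sum_Sn a (2*N+1)).
    replace (S (2*N+1)) with (2 * S N)%nat by lia.
    replace (S (2 * S N)) with (2 * S N + 1)%nat by lia.
    unfold plus; simpl. ring. }
  eapply is_lim_seq_ext. intros n; symmetry; apply E.
  apply (is_lim_seq_subseq (sum_n a) l (fun N => 2*N+1)%nat); auto.
  intros P [N HN]. exists N. intros n Hn. apply HN. lia.
Qed.

Lemma ex_series_le_R (a b : nat -> R) :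
  (forall n, Rabs (a n) <= b n) -> ex_series b -> ex_series a.
Proof. intros H Hb. apply (@ex_series_le R_AbsRing R_CompleteNormedModule a b); auto. Qed.

Lemma is_series_mult_l (c : R) (a : nat -> R) l :
  is_series a l -> is_series (fun n => c * a n) (c * l).
Proof. intros H. apply (is_series_scal_l c a l H). Qed.

Lemma is_series_add (a b : nat -> R) la lb :
  is_series a la -> is_series b lb -> is_series (fun n => a n + b n) (la + lb).
Proof. intros H1 H2. apply (is_series_plus a b la lb H1 H2). Qed.

Lemma is_series_ext_R (a b : nat -> R) (l : R) :
  (forall n, a n = b n) -> is_series a l -> is_series b l.
Proof. intros H1 H2. apply (is_series_ext a b l H1 H2). Qed.

Lemma is_series_prepend0 (a : nat -> R) l :
  a 0%nat = 0 -> is_series (fun k => a (S k)) l -> is_series a l.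
Proof.
  intros H0 H. apply is_series_decr_1. rewrite H0.
  match goal with |- is_series _ ?v => replace v with l end.
  eapply is_series_ext_R; [|exact H]. reflexivity.
  unfold plus, opp; simpl. lra.
Qed.

Lemma ex_series_inv_sq1 : ex_series (fun k => / (INR k + 1)^2).
Proof.
  apply (ex_series_le_R _ (fun k => 2 * (/(INR k + 1) - /(INR k + 2)))).
  - intros n.
    pose proof (pos_INR n).
    rewrite Rabs_pos_eq by (apply Rlt_le, Rinv_0_lt_compat; nra).
    replace (2*(/(INR n+1) - /(INR n+2))) with (/((INR n+1)*(INR n+2)/2)) by (field; lra).
    apply Rinv_le_contravar; nra.
  - apply (ex_series_bounded _ 2).
    + intros n. pose proof (pos_INR n).
      assert (/(INR n + 2) <= /(INR n + 1)) by (apply Rinv_le_contravar; lra). lra.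
    + intros N. rewrite sum_n_Reals.
      assert (E : forall N, sum_f_R0 (fun k => 2 * (/(INR k + 1) - /(INR k + 2))) N
               = 2 - 2 / (INR N + 2)).
      { induction N0. simpl. field. rewrite tech5, IHN0, S_INR.
        pose proof (pos_INR N0). field. lra. }
      rewrite E. pose proof (pos_INR N).
      assert (0 < 2/(INR N + 2)) by (apply Rdiv_lt_0_compat; lra). lra.
Qed.

Definition Sp (x : R) := Series (fun k => / (x + INR k)^2).

Lemma ex_Sp x : ex_series (fun k => / (x + INR k)^2).
Proof.
  destruct (archimed (Rabs x + 1)) as [Hu _].
  set (K := Z.to_nat (up (Rabs x + 1))).
  assert (HK : Rabs x + 1 <= INR K).
  { unfold K. rewrite INR_IZR_INZ. rewrite Z2Nat.id. lra.
    apply le_IZR. pose proof (Rabs_pos x). lra. }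
  apply (ex_series_incr_n _ K).
  apply (ex_series_le_R _ (fun k => / (INR k + 1)^2)); [|apply ex_series_inv_sq1].
  intros n.
  rewrite plus_INR. pose proof (pos_INR n). pose proof (Rle_abs (-x)). rewrite Rabs_Ropp in H0.
  rewrite Rabs_pos_eq by (apply Rlt_le, Rinv_0_lt_compat, pow_lt; nra).
  apply Rinv_le_contravar. apply pow_lt; lra.
  apply pow_incr; lra.
Qed.

Lemma Sp_shift x : Sp x = / x^2 + Sp (x+1).
Proof.
  unfold Sp. rewrite Series_incr_1 by apply ex_Sp. replace (x + INR 0) with x by (simpl; ring).
  f_equal. apply Series_ext. intros n. rewrite S_INR. f_equal. f_equal. ring.
Qed.

Lemma inv_sq_scale u : / u^2 = 4 * / (2*u)^2.
Proof.
  destruct (Req_dec u 0) as [Z|Z].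
  - subst. replace (2*0) with 0 by ring. simpl. rewrite !Rmult_0_l, Rinv_0. ring.
  - field. auto.
Qed.

Lemma Sp_dup x : Sp (x/2) + Sp ((x+1)/2) = 4 * Sp x.
Proof.
  unfold Sp.
  assert (H := pair_series (fun j => 4 * / (x + INR j)^2) (4 * Sp x)).
  assert (E1 : forall k, / (x/2 + INR k)^2 = 4 * / (x + INR (2*k))^2).
  { intros k. rewrite mult_INR. simpl INR.
    replace (x + (1+1) * INR k) with (2 * (x/2 + INR k)) by field.
    generalize (x/2 + INR k); intros u. apply inv_sq_scale. }
  assert (E2 : forall k, / ((x+1)/2 + INR k)^2 = 4 * / (x + INR (2*k+1))^2).
  { intros k. rewrite plus_INR, mult_INR. simpl INR.
    replace (x + ((1+1) * INR k + 1)) with (2 * ((x+1)/2 + INR k)) by field.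
    generalize ((x+1)/2 + INR k); intros u. apply inv_sq_scale. }
  rewrite (Series_ext _ _ E1), (Series_ext _ _ E2).
  rewrite <- Series_plus.
  - apply is_series_unique. apply H. unfold Sp.
    apply (is_series_mult_l 4). apply Series_correct. apply ex_Sp.
  - eapply ex_series_ext. exact E1. apply ex_Sp.
  - eapply ex_series_ext. exact E2. apply ex_Sp.
Qed.

Lemma inv_sq_nonneg u : 0 <= / u^2.
Proof.
  destruct (Req_dec u 0) as [Z|Z].
  - subst. simpl. rewrite Rmult_0_l, Rinv_0. lra.
  - apply Rlt_le, Rinv_0_lt_compat. replace (u^2) with (Rsqr u) by (unfold Rsqr; ring).
    apply Rsqr_pos_lt; auto.
Qed.

Lemma Sp_nonneg x : 0 <= Sp x.
Proof. apply Series_nonneg. intros n. apply inv_sq_nonneg. Qed.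

Lemma Sp_le1 y : 1 <= y -> Sp y <= Sp 1.
Proof.
  intros Hy. apply Series_le; [|apply ex_Sp].
  intros n. split. apply inv_sq_nonneg. pose proof (pos_INR n).
  apply Rinv_le_contravar. apply pow_lt; lra. apply pow_incr; lra.
Qed.

Definition nonint (x : R) := forall z : Z, x <> IZR z.
Definition Sfun x := Sp x + Sp (1 - x).
Definition Ffun x := PI^2 / sin (PI*x)^2.
Definition Dfun x := Ffun x - Sfun x.

Lemma Dfun_per x : Dfun (x + 1) = Dfun x.
Proof.
  unfold Dfun, Ffun, Sfun.
  replace (PI * (x+1)) with (PI*x + PI) by ring. rewrite neg_sin.
  replace (1 - (x+1)) with (-x) by ring.
  rewrite (Sp_shift x), (Sp_shift (-x)). replace (-x+1) with (1-x) by ring.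
  replace ((- sin (PI*x))^2) with (sin (PI*x)^2) by ring.
  replace ((-x)^2) with (x^2) by ring. ring.
Qed.

Lemma Dfun_perN x n : Dfun (x + INR n) = Dfun x.
Proof.
  induction n. simpl. rewrite Rplus_0_r; auto.
  rewrite S_INR. replace (x + (INR n + 1)) with ((x + INR n) + 1) by ring.
  rewrite Dfun_per. auto.
Qed.

Lemma Dfun_perZ x z : Dfun (x + IZR z) = Dfun x.
Proof.
  destruct z as [|p|p].
  - simpl. rewrite Rplus_0_r; auto.
  - rewrite <- positive_nat_Z, <- INR_IZR_INZ. apply Dfun_perN.
  - rewrite <- Pos2Z.opp_pos, opp_IZR, <- positive_nat_Z, <- INR_IZR_INZ.
    rewrite <- (Dfun_perN (x + - INR (Pos.to_nat p)) (Pos.to_nat p)).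
    f_equal. ring.
Qed.

Lemma sin_half_nz x : nonint x -> sin (PI * (x/2)) <> 0.
Proof.
  intros Hx H. apply sin_eq_0_0 in H. destruct H as [k Hk].
  apply (Hx (2*k)%Z). rewrite mult_IZR. pose proof PI_RGT_0.
  apply Rmult_eq_reg_l with (PI/2). simpl. rewrite Rmult_comm. rewrite Rmult_comm in Hk.
  replace (x * (PI/2)) with (x/2*PI) by field. rewrite Hk. field. lra.
Qed.

Lemma cos_half_nz x : nonint x -> cos (PI * (x/2)) <> 0.
Proof.
  intros Hx H. apply cos_eq_0_0 in H. destruct H as [k Hk].
  apply (Hx (2*k+1)%Z). rewrite plus_IZR, mult_IZR. pose proof PI_RGT_0.
  apply Rmult_eq_reg_l with (PI/2). simpl.
  replace (PI/2 * x) with (PI*(x/2)) by field. rewrite Hk. field. lra.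
Qed.

Lemma Dfun_dup x : nonint x -> Dfun (x/2) + Dfun ((x+1)/2) = 4 * Dfun x.
Proof.
  intros Hx. unfold Dfun, Sfun.
  assert (HS : Sp (x/2) + Sp (1 - x/2) + (Sp ((x+1)/2) + Sp (1 - (x+1)/2)) = 4 * (Sp x + Sp (1-x))).
  { rewrite Rmult_plus_distr_l, <- (Sp_dup (1-x)), <- Sp_dup.
    replace ((1-x)/2) with (1 - (x+1)/2) by field.
    replace ((1-x+1)/2) with (1 - x/2) by field. ring. }
  assert (HF : Ffun (x/2) + Ffun ((x+1)/2) = 4 * Ffun x).
  { unfold Ffun. pose proof (sin_half_nz x Hx). pose proof (cos_half_nz x Hx).
    replace (PI * ((x+1)/2)) with (PI*(x/2) + PI/2) by field.
    rewrite sin_plus, sin_PI2, cos_PI2.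
    replace (PI * x) with (2 * (PI*(x/2))) by field. rewrite sin_2a.
    assert (Hsc := sin2_cos2 (PI*(x/2))). unfold Rsqr in Hsc.
    revert H H0 Hsc. generalize (sin (PI*(x/2))) (cos (PI*(x/2))). intros a b Ha Hb Hab.
    replace (a*0 + b*1) with b by ring.
    transitivity (PI^2 * (a*a + b*b) / (a^2*b^2)). field; auto.
    rewrite Hab. field; auto. }
  lra.
Qed.

Lemma Ffun_sym x : Ffun (1 - x) = Ffun x.
Proof.
  unfold Ffun. replace (PI * (1-x)) with (PI - PI*x) by ring. rewrite sin_PI_x. auto.
Qed.

Lemma Ffun_bound x : 0 < x <= 1/2 -> / x^2 <= Ffun x <= / x^2 + 3 * PI^2.
Proof.
  intros Hx. unfold Ffun. pose proof PI_RGT_0. pose proof PI_4.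
  set (t := PI * x).
  assert (Ht : 0 < t <= 2) by (unfold t; split; nra).
  pose proof (sin_bound t 0 ltac:(lra) ltac:(unfold t; nra)) as [Hl Hu].
  replace (sin_approx t (2*0+1)) with (t - t^3/6) in Hl by (unfold sin_approx, sin_term; simpl; field).
  replace (sin_approx t (2*(0+1))) with (t - t^3/6 + t^5/120) in Hu by (unfold sin_approx, sin_term; simpl; field).
  set (s := sin t) in *.
  assert (Ht2 : t^2 <= 4) by nra.
  assert (Ht3 : t^3 <= 4*t) by (replace (t^3) with (t^2*t) by ring; nra).
  assert (Ht5 : t^5 <= 4*t^3) by (replace (t^5) with (t^2*t^3) by ring; assert (0 < t^3) by (apply pow_lt; lra); nra).
  assert (Hs1 : s <= t) by (assert (0 < t^3) by (apply pow_lt; lra); lra).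
  assert (Hs2 : t/3 <= s) by lra.
  assert (Hts : t^2 - s^2 <= t^4/3).
  { assert (0 <= t - s <= t^3/6) by lra. assert (0 <= t + s <= 2*t) by lra. nra. }
  assert (Ex : / x^2 = PI^2 / t^2) by (unfold t; field; lra).
  rewrite Ex. split.
  - apply Rmult_le_compat_l. nra. apply Rinv_le_contravar. nra. nra.
  - assert (PI^2/s^2 - PI^2/t^2 = PI^2 * ((t^2 - s^2)/(s^2*t^2))) by (field; lra).
    assert ((t^2 - s^2)/(s^2*t^2) <= 3).
    { assert (0 < s) by lra.
      apply Rmult_le_reg_r with (s^2*t^2). apply Rmult_lt_0_compat; apply pow_lt; lra. unfold Rdiv. rewrite Rmult_assoc, Rinv_l by (apply Rgt_not_eq, Rmult_lt_0_compat; apply pow_lt; lra).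
      assert (s^2 >= t^2/9) by nra.
      assert (0 < t^2) by nra.
      assert (s^2 * t^2 >= t^2/9 * t^2) by (apply Rmult_ge_compat_r; lra).
      replace (t^4) with (t^2*t^2) in Hts by ring. lra. }
    nra.
Qed.

Lemma Dfun_bound01 x : 0 < x < 1 -> Rabs (Dfun x) <= 3*PI^2 + 4 + 2 * Sp 1.
Proof.
  intros Hx. unfold Dfun, Sfun.
  rewrite (Sp_shift x), (Sp_shift (1-x)).
  pose proof (Sp_le1 (x+1) ltac:(lra)). pose proof (Sp_le1 (1-x+1) ltac:(lra)).
  pose proof (Sp_nonneg (x+1)). pose proof (Sp_nonneg (1-x+1)).
  assert (G : -4 <= Ffun x - /x^2 - /(1-x)^2 <= 3*PI^2).
  { destruct (Rle_or_lt x (1/2)).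
    - pose proof (Ffun_bound x ltac:(lra)).
      assert (/(1-x)^2 <= 4). { replace 4 with (/ (1/2)^2) by field. apply Rinv_le_contravar. nra. nra. }
      pose proof (inv_sq_nonneg (1-x)). lra.
    - rewrite <- Ffun_sym. pose proof (Ffun_bound (1-x) ltac:(lra)).
      assert (/x^2 <= 4). { replace 4 with (/ (1/2)^2) by field. apply Rinv_le_contravar. nra. nra. }
      pose proof (inv_sq_nonneg x). lra. }
  pose proof (Sp_nonneg 1). pose proof (pow2_ge_0 PI).
  apply Rabs_le. lra.
Qed.

Lemma Dfun_bound x : nonint x -> Rabs (Dfun x) <= 3*PI^2 + 4 + 2 * Sp 1.
Proof.
  intros Hx. pose proof (base_Int_part x) as [H1 H2].
  set (z := Int_part x) in *.
  replace x with ((x - IZR z) + IZR z) by ring. rewrite Dfun_perZ.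
  apply Dfun_bound01. split; [|lra].
  destruct H1 as [H1|H1]. lra. exfalso. apply (Hx z). auto.
Qed.

Lemma pow2_ge n : INR n <= 2^n.
Proof.
  induction n. simpl; lra. rewrite S_INR. simpl.
  assert (1 <= 2^n) by (apply pow_R1_Rle; lra). lra.
Qed.

Lemma Dfun_zero x : nonint x -> Dfun x = 0.
Proof.
  intros Hx. set (B := 3*PI^2 + 4 + 2 * Sp 1).
  assert (HB : forall n y, nonint y -> Rabs (Dfun y) <= B / 2^n).
  { induction n; intros y Hy.
    - simpl. unfold Rdiv. rewrite Rinv_1, Rmult_1_r. apply Dfun_bound; auto.
    - assert (Hy1 : nonint (y/2)).
      { intros z Hz. apply (Hy (2*z)%Z). rewrite mult_IZR. rewrite <- Hz. field. }
      assert (Hy2 : nonint ((y+1)/2)).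
      { intros z Hz. apply (Hy (2*z - 1)%Z). rewrite minus_IZR, mult_IZR. rewrite <- Hz. simpl. field. }
      pose proof (Dfun_dup y Hy) as E.
      assert (Rabs (Dfun y) = Rabs (Dfun (y/2) + Dfun ((y+1)/2)) / 4).
      { rewrite E, Rabs_mult, (Rabs_pos_eq 4) by lra. field. }
      rewrite H. pose proof (IHn _ Hy1). pose proof (IHn _ Hy2).
      pose proof (Rabs_triang (Dfun (y/2)) (Dfun ((y+1)/2))).
      simpl. assert (0 < 2^n) by (apply pow_lt; lra).
      replace (B / (2 * 2^n)) with ((B/2^n + B/2^n)/4) by (field; lra).
      unfold Rdiv at 1. unfold Rdiv at 3. apply Rmult_le_compat_r; lra. }
  destruct (Req_dec (Dfun x) 0) as [Z|Z]; auto. exfalso.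
  assert (Hp : 0 < Rabs (Dfun x)) by (apply Rabs_pos_lt; auto).
  destruct (archimed (B / Rabs (Dfun x))) as [Hu _].
  set (n := Z.to_nat (up (B / Rabs (Dfun x)))).
  assert (Hn : B / Rabs (Dfun x) < INR n).
  { unfold n. destruct (Z_le_gt_dec 0 (up (B / Rabs (Dfun x)))).
    rewrite INR_IZR_INZ, Z2Nat.id; auto.
    assert (B / Rabs (Dfun x) < 0). { apply Z.gt_lt, IZR_lt in g. lra. }
    pose proof (pos_INR (Z.to_nat (up (B / Rabs (Dfun x))))). lra. }
  pose proof (pow2_ge n). pose proof (HB n x Hx).
  assert (0 < 2^n) by (apply pow_lt; lra).
  assert (B < Rabs (Dfun x) * 2^n).
  { apply Rmult_lt_reg_r with (/ Rabs (Dfun x)). apply Rinv_0_lt_compat; auto.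
    replace (Rabs (Dfun x) * 2^n * / Rabs (Dfun x)) with (2^n) by (field; lra). unfold Rdiv in Hn. lra. }
  assert (Rabs (Dfun x) * 2^n <= B).
  { apply Rmult_le_reg_r with (/ 2^n). apply Rinv_0_lt_compat; auto.
    replace (Rabs (Dfun x) * 2^n * / 2^n) with (Rabs (Dfun x)) by (field; lra). auto. }
  lra.
Qed.

Lemma cos_sq_series z : -1 < z < 1 ->
  is_series (fun k => / (INR (2*k+1) + z)^2 + / (INR (2*k+1) - z)^2) (PI^2 / (4 * cos (PI*z/2)^2)).
Proof.
  intros Hz.
  assert (Hni : nonint ((1+z)/2)).
  { intros k Hk. assert (0 < IZR k < 1) by lra. destruct H as [Ha Hb].
    apply lt_IZR in Ha. apply lt_IZR in Hb. lia. }
  pose proof (Dfun_zero _ Hni) as HD. unfold Dfun, Sfun, Ffun in HD.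
  assert (E1 : forall k, / ((1+z)/2 + INR k)^2 = 4 * / (INR (2*k+1) + z)^2).
  { intros k. rewrite inv_sq_scale. f_equal. f_equal. f_equal. rewrite plus_INR, mult_INR. simpl. field. }
  assert (E2 : forall k, / (1 - (1+z)/2 + INR k)^2 = 4 * / (INR (2*k+1) - z)^2).
  { intros k. rewrite inv_sq_scale. f_equal. f_equal. f_equal. rewrite plus_INR, mult_INR. simpl. field. }
  assert (Ex1 := ex_Sp ((1+z)/2)). assert (Ex2 := ex_Sp (1 - (1+z)/2)).
  assert (Hs := is_series_add _ _ _ _ (Series_correct _ Ex1) (Series_correct _ Ex2)).
  apply (is_series_mult_l (/4)) in Hs.
  assert (Hc : 0 < cos (PI*z/2)).
  { pose proof PI_RGT_0. apply cos_gt_0; nra. }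
  assert (E : sin (PI * ((1+z)/2)) = cos (PI*z/2)).
  { replace (PI * ((1+z)/2)) with (PI*z/2 + PI/2) by field. rewrite sin_plus, sin_PI2, cos_PI2. ring. }
  rewrite E in HD. fold (Sp ((1+z)/2)) in Hs. fold (Sp (1 - (1+z)/2)) in Hs.
  replace (PI^2 / (4 * cos (PI*z/2)^2)) with (/4 * (Sp ((1+z)/2) + Sp (1 - (1+z)/2))).
  2:{ replace (Sp ((1+z)/2) + Sp (1 - (1+z)/2)) with (PI^2 / cos (PI*z/2)^2) by lra.
        field. apply Rgt_not_eq; lra. }
  eapply is_series_ext; [|exact Hs].
  intros n. cbv beta. rewrite E1, E2.
  change (/ 4 * (4 * / (INR (2 * n + 1) + z) ^ 2 + 4 * / (INR (2 * n + 1) - z) ^ 2) =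
   / (INR (2 * n + 1) + z) ^ 2 + / (INR (2 * n + 1) - z) ^ 2). field.
  rewrite plus_INR, mult_INR; simpl; pose proof (pos_INR n); split; apply Rgt_not_eq; lra.
Qed.

Lemma derive_uniq (f : R -> R) x l1 l2 : is_derive f x l1 -> is_derive f x l2 -> l1 = l2.
Proof. intros H1 H2. apply is_derive_unique in H1. apply is_derive_unique in H2. congruence. Qed.

Lemma is_derive_ext_int (f g : R -> R) x l :
  -1 < x < 1 -> (forall y, -1 < y < 1 -> f y = g y) -> is_derive f x l -> is_derive g x l.
Proof.
  intros Hx Hfg Hd. apply (is_derive_ext_loc f g x l); auto.
  assert (He : 0 < Rmin (x+1) (1-x)) by (apply Rmin_pos; lra).
  exists (mkposreal _ He). intros y Hy. apply Hfg.
  unfold ball in Hy; simpl in Hy. unfold AbsRing_ball, abs, minus, plus, opp in Hy; simpl in Hy.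
  apply Rabs_def2 in Hy. pose proof (Rmin_l (x+1) (1-x)). pose proof (Rmin_r (x+1) (1-x)). lra.
Qed.

Lemma radius_ge1 (a : nat -> R) M :
  (forall n, Rabs (a n) <= M) -> forall x, Rabs x < 1 -> Rbar_lt (Rabs x) (CV_radius a).
Proof.
  intros HM x Hx.
  destruct (CV_radius_bounded a) as [Hub _].
  assert (H1 : Rbar_le 1 (CV_radius a)).
  { apply Hub. exists M. intros n. rewrite pow1, Rmult_1_r. auto. }
  destruct (CV_radius a) as [r| |]; simpl in *; auto; lra.
Qed.

Lemma scal_pow (a : nat -> R) (x : R) n : scal (pow_n x n) (a n) = a n * x ^ n.
Proof. unfold scal. simpl. unfold mult. simpl. rewrite pow_n_pow. ring. Qed.

Lemma pseries_R (a : nat -> R) x l : is_pseries a x l <-> is_series (fun k => a k * x^k) l.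
Proof.
  unfold is_pseries. split; intros H.
  - eapply is_series_ext_R; [|exact H]. intros n. cbv beta. apply scal_pow.
  - eapply is_series_ext_R; [|exact H]. intros n. cbv beta. symmetry. apply scal_pow.
Qed.

Lemma geom_deriv q : Rabs q < 1 -> is_series (fun j => INR (j+1) * q^j) (/ (1-q)^2).
Proof.
  intros Hq. set (a := fun _ : nat => 1).
  assert (Hr : Rbar_lt (Rabs q) (CV_radius a)) by (apply (radius_ge1 a 1); auto; intros; unfold a; rewrite Rabs_R1; lra).
  pose proof (is_derive_PSeries a q Hr) as Hd.
  assert (Hq' : -1 < q < 1) by (apply Rabs_def2 in Hq; lra).
  assert (Eq : forall y, -1 < y < 1 -> PSeries a y = / (1 - y)).
  { intros y Hy. apply is_pseries_unique. apply pseries_R.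
    eapply is_series_ext_R; [|apply is_series_geom]. intros n; unfold a; ring.
    apply Rabs_def1; lra. }
  apply (is_derive_ext_int _ _ q _ Hq' Eq) in Hd.
  assert (Hd2 : is_derive (fun y => / (1 - y)) q (/ (1-q)^2)).
  { auto_derive. lra. field. lra. }
  rewrite <- (derive_uniq _ _ _ _ Hd Hd2).
  eapply is_series_ext_R; [|apply (proj1 (pseries_R (PS_derive a) q _)), PSeries_correct, ex_pseries_derive, Hr].
  intros n. unfold PS_derive, a.
  rewrite Nat.add_1_r. ring.
Qed.

Lemma lam_term_le s m : (2 <= s)%nat ->
  0 <= / INR (2*m+1) ^ s <= / (INR m + 1)^2.
Proof.
  intros Hs. assert (H1 : INR m + 1 <= INR (2*m+1)).
  { rewrite plus_INR, mult_INR. simpl. pose proof (pos_INR m). lra. }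
  pose proof (pos_INR m).
  split. apply Rlt_le, Rinv_0_lt_compat, pow_lt. lra.
  apply Rinv_le_contravar. apply pow_lt; lra.
  apply Rle_trans with (INR (2*m+1) ^ 2). apply pow_incr; lra.
  apply Rle_pow; auto; lra.
Qed.

Lemma ex_lam s : (2 <= s)%nat -> ex_series (fun m => / INR (2*m+1) ^ s).
Proof.
  intros Hs. apply (ex_series_le_R _ (fun m => / (INR m + 1)^2)); [|apply ex_series_inv_sq1].
  intros n. destruct (lam_term_le s n Hs). rewrite Rabs_pos_eq; auto.
Qed.

Lemma is_lam s : (2 <= s)%nat -> is_series (fun m => / INR (2*m+1) ^ s) (dlambda s).
Proof. intros Hs. apply Series_correct, ex_lam; auto. Qed.

Lemma lam_bounds s : (2 <= s)%nat -> 0 <= dlambda s <= dlambda 2.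
Proof.
  intros Hs. split. apply Series_nonneg. intros n; apply (lam_term_le s n Hs).
  apply Series_le; [|apply ex_lam; auto].
  intros n. split. apply (lam_term_le s n Hs).
  pose proof (pos_INR n). assert (H1 : 1 <= INR (2*n+1)).
  { rewrite plus_INR, mult_INR. simpl. lra. }
  apply Rinv_le_contravar. apply pow_lt; lra. apply Rle_pow; auto.
Qed.

Lemma inv_sq_expand (n z : R) : 1 <= n -> Rabs z < 1 ->
  is_series (fun j => INR (j+1) * (z^j + (-z)^j) / n^(j+2)) (/(n+z)^2 + /(n-z)^2).
Proof.
  intros Hn Hz. apply Rabs_def2 in Hz.
  assert (H1 : Rabs (z/n) < 1).
  { apply Rabs_def1. apply Rmult_lt_reg_r with n. lra. unfold Rdiv. rewrite Rmult_assoc, Rinv_l; lra.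
    apply Rmult_lt_reg_r with n. lra. unfold Rdiv. rewrite Rmult_assoc, Rinv_l; lra. }
  assert (H2 : Rabs (-z/n) < 1).
  { unfold Rdiv. rewrite Ropp_mult_distr_l_reverse, Rabs_Ropp. exact H1. }
  pose proof (is_series_mult_l (/n^2) _ _ (geom_deriv _ H1)) as G1.
  pose proof (is_series_mult_l (/n^2) _ _ (geom_deriv _ H2)) as G2.
  pose proof (is_series_add _ _ _ _ G2 G1) as G.
  replace (/(n+z)^2 + /(n-z)^2) with (/n^2 * /(1 - -z/n)^2 + /n^2 * /(1 - z/n)^2).
  2:{ field. lra. }
  eapply is_series_ext_R; [|exact G]. intros j. cbv beta.
  unfold Rdiv. rewrite !Rpow_mult_distr, !pow_inv, pow_add. field. split. lra. apply pow_nonzero. lra.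
Qed.

Definition pco (j : nat) : R :=
  match j with O => 0 | S _ => (1 + (-1)^j) * dlambda j / INR j end.

Lemma neg1_pow_cases j : ((-1)^j = 1 /\ exists m, j = (2*m)%nat) \/ ((-1)^j = -1 /\ exists m, j = (2*m+1)%nat).
Proof.
  destruct (Nat.Even_or_Odd j) as [[m Hm]|[m Hm]].
  - left. split. subst. rewrite pow_1_even. auto. exists m; lia.
  - right. split. subst. rewrite Nat.add_1_r, pow_1_odd. auto. exists m; lia.
Qed.

Lemma pco_bound j : Rabs (pco j) <= 2 * dlambda 2.
Proof.
  pose proof (lam_bounds 2 (le_n 2)) as [L0 _].
  destruct j as [|j]. simpl. rewrite Rabs_R0. lra.
  unfold pco. destruct (neg1_pow_cases (S j)) as [[E _]|[E _]]; rewrite E.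
  - destruct j as [|j]. simpl in E. lra.
    pose proof (lam_bounds (S (S j)) ltac:(lia)) as [A B].
    assert (1 <= INR (S (S j))) by (rewrite !S_INR; pose proof (pos_INR j); lra).
    rewrite Rabs_pos_eq. 2:{ apply Rmult_le_pos. lra. apply Rlt_le, Rinv_0_lt_compat; lra. }
    apply Rle_trans with ((1+1) * dlambda (S (S j))).
    apply Rmult_le_reg_r with (INR (S (S j))). lra.
    unfold Rdiv. rewrite Rmult_assoc, Rinv_l by lra. nra. lra.
  - replace (1 + -1) with 0 by ring. unfold Rdiv. rewrite !Rmult_0_l, Rabs_R0. lra.
Qed.

Lemma pco_radius z : Rabs z < 1 -> Rbar_lt (Rabs z) (CV_radius pco).
Proof. apply (radius_ge1 pco (2 * dlambda 2)). apply pco_bound. Qed.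

Lemma pco_odd k : pco (2*k+1) = 0.
Proof.
  unfold pco. replace (2*k+1)%nat with (S (2*k)) by lia. rewrite pow_1_odd.
  replace (1 + -1) with 0 by ring. unfold Rdiv. ring.
Qed.

Lemma pco_dd j : PS_derive (PS_derive pco) j = INR (j+1) * (1 + (-1)^j) * dlambda (j+2).
Proof.
  unfold PS_derive, pco. replace (j+2)%nat with (S (S j)) by lia.
  rewrite Nat.add_1_r. simpl pow. rewrite !S_INR. pose proof (pos_INR j). field. lra.
Qed.

Lemma sum_pow_nonneg z j : 0 <= z^j + (-z)^j.
Proof.
  replace ((-z)^j) with ((-1)^j * z^j) by (rewrite <- Rpow_mult_distr; f_equal; ring).
  destruct (neg1_pow_cases j) as [[E [m Hm]]|[E _]]; rewrite E.
  - subst. rewrite pow_mult. pose proof (pow2_ge_0 z). assert (0 <= (z^2)^m) by (apply pow_le; auto). lra.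
  - lra.
Qed.

Lemma sum_pow_abs z j : Rabs (z^j + (-z)^j) <= 2 * Rabs z ^ j.
Proof.
  eapply Rle_trans. apply Rabs_triang. rewrite <- !RPow_abs, Rabs_Ropp. lra.
Qed.

Lemma dd_series z : Rabs z < 1 ->
  is_series (fun j => PS_derive (PS_derive pco) j * z^j) (PI^2 / (4 * cos (PI*z/2)^2)).
Proof.
  intros Hz.
  set (a := fun k j => INR (j+1) * (z^j + (-z)^j) / INR (2*k+1)^(j+2)).
  set (C := fun j => INR (j+1) * (z^j + (-z)^j) * dlambda (j+2)).
  assert (Ha : forall k j, 0 <= a k j).
  { intros k j. unfold a. apply Rmult_le_pos. apply Rmult_le_pos. apply pos_INR. apply sum_pow_nonneg.
    apply Rlt_le, Rinv_0_lt_compat, pow_lt. rewrite plus_INR, mult_INR; simpl; pose proof (pos_INR k); lra. }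
  assert (Hc : forall j, is_series (fun k => a k j) (C j)).
  { intros j. unfold C. eapply is_series_ext_R; [|apply is_series_mult_l, is_lam; lia].
    intros k. unfold a. cbv beta. unfold Rdiv. reflexivity. }
  assert (HexC : ex_series C).
  { apply (ex_series_le_R _ (fun j => 2 * dlambda 2 * (INR (j+1) * Rabs z ^ j))).
    - intros j. unfold C. pose proof (lam_bounds (j+2) ltac:(lia)) as [L1 L2].
      rewrite !Rabs_mult, (Rabs_pos_eq (INR _)) by apply pos_INR. rewrite (Rabs_pos_eq (dlambda _)) by auto.
      pose proof (sum_pow_abs z j). pose proof (pos_INR (j+1)).
      pose proof (Rabs_pos (z^j + (-z)^j)).
      assert (0 <= Rabs z ^ j) by (apply pow_le, Rabs_pos).
      apply (Rle_trans _ (INR (j+1) * (2 * Rabs z ^ j) * dlambda 2)).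
      { apply Rmult_le_compat. apply Rmult_le_pos; auto. lra. apply Rmult_le_compat_l; lra. lra. } right; ring.
    - eexists. apply is_series_mult_l. apply geom_deriv. rewrite Rabs_Rabsolu; auto. }
  destruct (swap_series a C (Series C) Ha Hc (Series_correct _ HexC)) as [_ Hsw].
  assert (E1 : forall k, Series (a k) = / (INR (2*k+1) + z)^2 + / (INR (2*k+1) - z)^2).
  { intros k. apply is_series_unique. unfold a. apply inv_sq_expand; auto.
    rewrite plus_INR, mult_INR; simpl; pose proof (pos_INR k); lra. }
  assert (Hz' : -1 < z < 1) by (apply Rabs_def2 in Hz; lra).
  pose proof (cos_sq_series z Hz') as Hcs.
  assert (ET : Series C = PI^2 / (4 * cos (PI*z/2)^2)).
  { apply is_series_unique in Hcs. rewrite <- Hcs. symmetry. apply is_series_unique.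
    eapply is_series_ext_R; [|exact Hsw]. intros k. apply E1. }
  rewrite <- ET. eapply is_series_ext_R; [|apply Series_correct, HexC].
  intros j. unfold C. rewrite pco_dd.
  replace ((-z)^j) with ((-1)^j * z^j) by (rewrite <- Rpow_mult_distr; f_equal; ring). ring.
Qed.

Lemma ln_cos_pseries z : -1 < z < 1 -> ln (cos (PI*z/2)) = - PSeries pco z.
Proof.
  intros Hz.
  assert (Hr : forall y, -1 < y < 1 -> Rbar_lt (Rabs y) (CV_radius pco)).
  { intros y Hy. apply pco_radius. apply Rabs_def1; lra. }
  assert (Hr' : forall y, -1 < y < 1 -> Rbar_lt (Rabs y) (CV_radius (PS_derive pco))).
  { intros y Hy. rewrite CV_radius_derive. auto. }
  assert (Hcos : forall y, -1 < y < 1 -> 0 < cos (PI*y/2)).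
  { intros y Hy. pose proof PI_RGT_0. apply cos_gt_0; nra. }
  set (Q1 := fun y => PI/2 * sin (PI*y/2) / cos (PI*y/2) - PSeries (PS_derive pco) y).
  assert (HQ1 : forall y, -1 < y < 1 -> is_derive Q1 y 0).
  { intros y Hy. unfold Q1.
    assert (Hd := is_derive_PSeries _ _ (Hr' y Hy)).
    assert (Hs := dd_series y ltac:(apply Rabs_def1; lra)).
    apply (proj2 (pseries_R _ _ _)) in Hs. apply is_pseries_unique in Hs. rewrite Hs in Hd.
    pose proof (Hcos y Hy).
    evar (d : R).
    assert (Hd1 : is_derive (fun y => PI/2 * sin (PI*y/2) / cos (PI*y/2)) y d).
    { auto_derive. lra. unfold d. reflexivity. }
    replace 0 with (d - PI^2 / (4 * cos (PI*y/2)^2)).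
    apply (is_derive_minus _ _ _ _ _ Hd1 Hd).
    unfold d. assert (Hsc := sin2_cos2 (PI*y/2)). unfold Rsqr in Hsc.
    change (PI*y*/2) with (PI*y/2).
    revert Hsc H. generalize (sin (PI*y/2)) (cos (PI*y/2)). intros sn cs Hsc Hc.
    transitivity (PI^2/4 * ((sn*sn + cs*cs) - 1) / cs^2). field. lra.
    rewrite Hsc. field. lra. }
  assert (Q1c : forall y, -1 < y < 1 -> Q1 y = Q1 0).
  { intros y Hy. destruct (Rtotal_order y 0) as [H|[H|H]].
    - apply (eq_is_derive Q1 y 0); auto. intros t Ht. apply HQ1. lra.
    - subst; auto.
    - symmetry. apply (eq_is_derive Q1 0 y); auto. intros t Ht. apply HQ1. lra. }
  assert (Q10 : Q1 0 = 0).
  { unfold Q1. rewrite PSeries_0. unfold PS_derive, pco. simpl.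
    replace (PI*0/2) with 0 by field. rewrite sin_0, cos_0. field. }
  set (Q := fun y => ln (cos (PI*y/2)) + PSeries pco y).
  assert (HQ : forall y, -1 < y < 1 -> is_derive Q y 0).
  { intros y Hy. unfold Q.
    assert (Hd := is_derive_PSeries _ _ (Hr y Hy)).
    pose proof (Hcos y Hy).
    evar (d : R).
    assert (Hd1 : is_derive (fun y => ln (cos (PI*y/2))) y d).
    { auto_derive. lra. unfold d. reflexivity. }
    replace 0 with (d + PSeries (PS_derive pco) y).
    apply (is_derive_plus _ _ _ _ _ Hd1 Hd).
    pose proof (Q1c y Hy). rewrite Q10 in H0. unfold Q1 in H0. unfold d.
    change (PI*y*/2) with (PI*y/2).
    replace (PSeries (PS_derive pco) y) with (PI / 2 * sin (PI * y / 2) / cos (PI * y / 2)) by lra.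
    field. lra. }
  assert (Q0 : Q 0 = 0).
  { unfold Q. rewrite PSeries_0. replace (PI*0/2) with 0 by field. rewrite cos_0, ln_1. simpl. ring. }
  assert (Q z = 0).
  { rewrite <- Q0. destruct (Rtotal_order z 0) as [H|[H|H]].
    - apply (eq_is_derive Q z 0); auto. intros t Ht. apply HQ. lra.
    - subst; auto.
    - symmetry. apply (eq_is_derive Q 0 z); auto. intros t Ht. apply HQ. lra. }
  unfold Q in H. lra.
Qed.

Lemma finsum_derive n y :
  is_derive (fun y => sum_f_R0 (fun k => y^(k+1) / INR (k+1)) n) y (sum_f_R0 (fun k => y^k) n).
Proof.
  induction n.
  - simpl. auto_derive. auto. field.
  - eapply is_derive_ext. intros t. rewrite tech5. reflexivity.
    rewrite tech5. apply (is_derive_plus _ _ _ _ _ IHn).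
    auto_derive. auto. rewrite !Nat.add_1_r. rewrite S_INR.
    pose proof (pos_INR (S n)). rewrite S_INR in H.
    replace (S (S n) - 1)%nat with (S n) by lia. field. lra.
Qed.

Section F2.
Variable q : nat.

Definition hco (m : nat) : R := / INR (S q + 1 + 2*m).

Lemma hco_bound m : Rabs (hco m) <= 1.
Proof.
  unfold hco. assert (1 <= INR (S q + 1 + 2*m)).
  { apply (le_INR 1). lia. }
  rewrite Rabs_pos_eq. replace 1 with (/1) by field. apply Rinv_le_contravar; lra.
  apply Rlt_le, Rinv_0_lt_compat; lra.
Qed.

Lemma hco_radius w : Rabs w < 1 -> Rbar_lt (Rabs w) (CV_radius hco).
Proof. apply (radius_ge1 hco 1). apply hco_bound. Qed.

Lemma hco_ident w : Rabs w < 1 ->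
  INR (S q + 1) * PSeries hco w + 2 * w * PSeries (PS_derive hco) w = / (1 - w).
Proof.
  intros Hw.
  assert (H1 := proj1 (pseries_R _ _ _) (PSeries_correct _ _ (CV_radius_inside _ _ (hco_radius w Hw)))).
  assert (Hr' : Rbar_lt (Rabs w) (CV_radius (PS_derive hco))) by (rewrite CV_radius_derive; apply hco_radius; auto).
  assert (H2 := proj1 (pseries_R _ _ _) (PSeries_correct _ _ (CV_radius_inside _ _ Hr'))).
  assert (H3 : is_series (fun m => INR m * hco m * w^m) (w * PSeries (PS_derive hco) w)).
  { apply is_series_prepend0. simpl. ring.
    eapply is_series_ext_R; [|apply (is_series_mult_l w _ _ H2)].
    intros n. cbv beta. unfold PS_derive. simpl pow. ring. }
  pose proof (is_series_add _ _ _ _ (is_series_mult_l (INR (S q + 1)) _ _ H1) (is_series_mult_l 2 _ _ H3)) as H4.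
  assert (H5 : is_series (fun m => w^m) (/ (1 - w))) by (apply is_series_geom; auto).
  rewrite <- (is_series_unique _ _ H5).
  replace (INR (S q + 1) * PSeries hco w + 2 * w * PSeries (PS_derive hco) w)
    with (INR (S q + 1) * PSeries hco w + 2 * (w * PSeries (PS_derive hco) w)) by ring.
  symmetry. apply is_series_unique.
  eapply is_series_ext_R; [|exact H4].
  intros n. cbv beta.
  unfold hco. rewrite !plus_INR, mult_INR, S_INR. simpl.
  pose proof (pos_INR n). pose proof (pos_INR q). field. lra.
Qed.


Lemma is_derive_val (f : R -> R) x l1 l2 : is_derive f x l1 -> l1 = l2 -> is_derive f x l2.
Proof. intros H E; subst; auto. Qed.

Lemma LogP_derive u : -1 < u < 1 ->
  is_derive (fun u => LogP (S q) u) u (- / (1-u) + sum_f_R0 (fun k => u^k) q).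
Proof.
  intros Hu. unfold LogP. simpl (S q - 1)%nat. rewrite Nat.sub_0_r.
  apply (is_derive_plus (fun u => ln (1-u)) (fun u => sum_f_R0 (fun k => u^(k+1)/INR(k+1)) q)).
  - auto_derive. lra. field. lra.
  - apply finsum_derive.
Qed.

Lemma LogP_derive_neg u : -1 < u < 1 ->
  is_derive (fun u => LogP (S q) (-u)) u (/ (1+u) - sum_f_R0 (fun k => (-u)^k) q).
Proof.
  intros Hu.
  assert (H := is_derive_comp (fun u => LogP (S q) u) Ropp u _ _ (LogP_derive (-u) ltac:(lra))
            (is_derive_opp (fun x => x) u 1 (is_derive_id u))).
  apply (is_derive_val _ _ _ _ H).
  unfold scal; simpl; unfold mult; simpl. unfold opp; simpl.
  replace (1 - -u) with (1+u) by ring. ring.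
Qed.

Lemma H_derive u : -1 < u < 1 ->
  is_derive (fun u => PSeries hco (u^2)) u (2 * u * PSeries (PS_derive hco) (u^2)).
Proof.
  intros Hu.
  assert (Hw : Rabs (u^2) < 1).
  { rewrite Rabs_pos_eq by (apply pow2_ge_0). nra. }
  assert (Hp : is_derive (fun u => u^2) u (2*u)) by (auto_derive; [auto| ring]).
  assert (H := is_derive_comp (PSeries hco) (fun u => u^2) u _ _ (is_derive_PSeries _ _ (hco_radius _ Hw)) Hp).
  apply (is_derive_val _ _ _ _ H).
  unfold scal; simpl; unfold mult; simpl. ring.
Qed.

Lemma LogP_zero : LogP (S q) 0 = 0.
Proof.
  unfold LogP. replace (1-0) with 1 by ring. rewrite ln_1.
  rewrite (sum_eq _ (fun _ => 0)). rewrite sum_cte. ring.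
  intros i _. rewrite pow_i by lia. unfold Rdiv; ring.
Qed.

Lemma F2 u : -1 < u < 1 ->
  LogP (S q) u + (-1)^q * LogP (S q) (-u) = -2 * (u^(S q + 1) * PSeries hco (u^2)).
Proof.
  intros Hu.
  set (G := fun u => LogP (S q) u + (-1)^q * LogP (S q) (-u) + 2 * (u^(S q + 1) * PSeries hco (u^2))).
  assert (HG : forall t, -1 < t < 1 -> is_derive G t 0).
  { intros t Ht.
    assert (Hd1 := LogP_derive t Ht).
    assert (Hd2 := is_derive_scal _ t ((-1)^q) _ (LogP_derive_neg t Ht)).
    assert (Hp : is_derive (fun u => u^(S q + 1)) t (INR (S q + 1) * t^(S q + 1 - 1))).
    { apply (is_derive_val _ _ _ _ (is_derive_pow (fun u => u) (S q + 1) t 1 (is_derive_id t))).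
      rewrite Nat.sub_1_r. change (INR (S q + 1) * 1 * t ^ Init.Nat.pred (S q + 1) = INR (S q + 1) * t ^ Init.Nat.pred (S q + 1)). ring. }
    assert (Hd3 := is_derive_mult (fun u => u^(S q + 1)) (fun u => PSeries hco (u^2)) t _ _
                 Hp (H_derive t Ht) (fun n m => Rmult_comm n m)).
    assert (Hd4 := is_derive_scal _ t 2 _ Hd3).
    assert (Hd := is_derive_plus _ _ _ _ _ (is_derive_plus _ _ _ _ _ Hd1 Hd2) Hd4).
    apply (is_derive_val _ _ _ _ Hd). cbv beta.
    assert (Hw : Rabs (t^2) < 1).
    { rewrite Rabs_pos_eq by (apply pow2_ge_0). nra. }
    pose proof (hco_ident (t^2) Hw) as HI.
    rewrite !tech3 by lra.
    replace (S q + 1 - 1)%nat with (S q) by lia.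
    replace (t^(S q + 1)) with (t * t^(S q)) by (rewrite Nat.add_1_r; simpl; ring).
    assert (Hm : (-t)^(S q) = -1 * (-1)^q * t^(S q)).
    { simpl. replace (-t) with (-1*t) by ring. rewrite Rpow_mult_distr. ring. }
    rewrite Hm.
    set (P := t^(S q)) in *. set (E := (-1)^q).
    assert (EE : E * E = 1) by (unfold E; rewrite <- pow_add; replace (q+q)%nat with (2*q)%nat by lia; apply pow_1_even).
    set (H0 := PSeries hco (t^2)) in *. set (H1 := PSeries (PS_derive hco) (t^2)) in *.
    set (N := INR (S q + 1)) in *.
    assert (Ht2 : N * H0 + 2 * (t*t) * H1 = / (1 - t*t)) by (replace (t*t) with (t^2) by ring; rewrite <- HI; ring).
    unfold scal, plus, mult; simpl.
    transitivity (-/(1-t) + (1 - P)/(1-t) + E * (/(1+t) - (1 - (-1)*E*P)/(1-(-t)))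
       + 2 * (P * (N * H0 + 2*(t*t)*H1))).
    { ring. }
    rewrite Ht2. transitivity (P * (1 - E*E) / (1+t)). field. repeat split; intro; nra.
    rewrite EE. field. intro; lra. }
  assert (G0 : G 0 = 0).
  { unfold G. replace (-0) with 0 by ring. rewrite LogP_zero. rewrite pow_i by lia. ring. }
  assert (G u = 0).
  { rewrite <- G0. destruct (Rtotal_order u 0) as [H|[H|H]].
    - apply (eq_is_derive G u 0); auto. intros t Ht. apply HG. lra.
    - subst; auto.
    - symmetry. apply (eq_is_derive G 0 u); auto. intros t Ht. apply HG. lra. }
  unfold G in H. lra.
Qed.
End F2.

Lemma is_series_drop0 (a : nat -> R) l :
  a 0%nat = 0 -> is_series a l -> is_series (fun k => a (S k)) l.
Proof.
  intros H0 H. apply is_series_incr_1.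
  match goal with |- is_series _ ?v => replace v with l end. auto.
  rewrite H0. unfold plus; simpl. lra.
Qed.

Lemma S1_series z : 0 <= z < 1 ->
  is_series (fun m => dlambda (2*(m+1)) / INR (m+1) * z^(2*(m+1))) (PSeries pco z).
Proof.
  intros Hz.
  assert (Hr : Rbar_lt (Rabs z) (CV_radius pco)) by (apply pco_radius; rewrite Rabs_pos_eq; lra).
  pose proof (proj1 (pseries_R _ _ _) (PSeries_correct _ _ (CV_radius_inside _ _ Hr))) as H.
  apply pair_series in H.
  assert (H2 : is_series (fun k => pco (2*k) * z^(2*k)) (PSeries pco z)).
  { eapply is_series_ext_R; [|exact H]. intros k. cbv beta. rewrite pco_odd. ring. }
  apply is_series_drop0 in H2. 2:{ simpl. ring. }
  eapply is_series_ext_R; [|exact H2]. intros m. cbv beta.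
  replace (2 * S m)%nat with (S (2*m+1)) by lia. replace (2*(m+1))%nat with (S (2*m+1)) by lia.
  unfold pco. replace (S (2*m+1)) with (2*(m+1))%nat at 1 by lia. rewrite pow_1_even.
  replace (INR (S (2*m+1))) with (2 * INR (m+1)) by (rewrite S_INR, !plus_INR, mult_INR; simpl; ring).
  pose proof (pos_INR m). rewrite plus_INR. simpl. field. lra.
Qed.

Lemma LHS_term q z k : 0 <= z < 1 ->
  let n := INR (2*k+1) in
  (n/2)^q * (LogP (S q) (z/n) + (-1)^q * LogP (S q) (-(z/n))) =
  -2 * (z/2)^q * Series (fun m => z^(2*m+2) / n^(2*m+2) * hco q m).
Proof.
  intros Hz n.
  assert (Hn : 1 <= n) by (unfold n; rewrite plus_INR, mult_INR; simpl; pose proof (pos_INR k); lra).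
  set (u := z/n).
  assert (Hu : 0 <= u < 1).
  { unfold u. split. apply Rdiv_le_0_compat; lra.
    apply Rmult_lt_reg_r with n. lra. unfold Rdiv. rewrite Rmult_assoc, Rinv_l; lra. }
  rewrite F2 by lra.
  assert (Hw : Rabs (u^2) < 1) by (rewrite Rabs_pos_eq by apply pow2_ge_0; nra).
  pose proof (proj1 (pseries_R _ _ _) (PSeries_correct _ _ (CV_radius_inside _ _ (hco_radius q _ Hw)))) as H.
  apply (is_series_mult_l (u^2)) in H.
  rewrite (is_series_unique (fun m => z^(2*m+2) / n^(2*m+2) * hco q m) (u^2 * PSeries (hco q) (u^2))).
  - replace (u^(S q + 1)) with (u^q * u^2) by (rewrite <- pow_add; f_equal; lia).
    replace ((z/2)^q) with ((n/2)^q * u^q) by (unfold u; rewrite <- Rpow_mult_distr; f_equal; field; lra).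
    ring.
  - eapply is_series_ext_R; [|exact H]. intros m. cbv beta.
    unfold u.
    replace (z^(2*m+2) / n^(2*m+2)) with ((z/n)^(2*m+2)) by (unfold Rdiv; rewrite Rpow_mult_distr, pow_inv; reflexivity).
    replace (2*m+2)%nat with (2 + 2*m)%nat by lia. rewrite pow_add, pow_mult. ring.
Qed.

Theorem theorem2p8 (r : nat) (x : R) :
  (2 <= r)%nat -> 0 <= x -> x < PI ->
  logC r (x / (2 * PI)) =
  (x / (2 * PI)) ^ (r - 1) *
    (ln (cos (x / 2)) +
     INR (r - 1) *
       Series (fun n : nat =>
         dlambda (2 * (n + 1)) / (INR (n + 1) * INR (2 * (n + 1) + r - 1))
           * (x / PI) ^ (2 * (n + 1)))).
Proof.
  intros Hr Hx0 HxP.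
  destruct r as [|q]; [lia|].
  replace (S q - 1)%nat with q by lia.
  pose proof PI_RGT_0 as HPI.
  set (z := x / PI).
  assert (Hz : 0 <= z < 1).
  { unfold z. split. apply Rdiv_le_0_compat; lra.
    apply Rmult_lt_reg_r with PI. lra. unfold Rdiv. rewrite Rmult_assoc, Rinv_l; lra. }
  replace (x / (2*PI)) with (z/2) by (unfold z; field; lra).
  replace (x/2) with (PI*z/2) by (unfold z; field; lra).
  set (a := fun k m => z^(2*m+2) / INR (2*k+1)^(2*m+2) * hco q m).
  set (C := fun m => z^(2*m+2) * hco q m * dlambda (2*m+2)).
  assert (Hhco : forall m, 0 <= hco q m <= 1).
  { intros m. pose proof (hco_bound q m). unfold hco in *. split.
    apply Rlt_le, Rinv_0_lt_compat. apply (lt_INR 0). lia. apply Rabs_le_between in H; lra.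
    }
  assert (Ha : forall k m, 0 <= a k m).
  { intros k m. unfold a. apply Rmult_le_pos. apply Rdiv_le_0_compat. apply pow_le; lra.
    apply pow_lt. rewrite plus_INR, mult_INR; simpl; pose proof (pos_INR k); lra. apply Hhco. }
  assert (Hc : forall m, is_series (fun k => a k m) (C m)).
  { intros m. unfold C. eapply is_series_ext_R; [|apply is_series_mult_l, is_lam; lia].
    intros k. unfold a. cbv beta. unfold Rdiv. ring. }
  assert (HexC : ex_series C).
  { apply (ex_series_le_R _ (fun m => dlambda 2 * (z^2)^m)).
    - intros m. unfold C. pose proof (lam_bounds (2*m+2) ltac:(lia)) as [L1 L2].
      pose proof (Hhco m).
      assert (0 <= z^(2*m+2) <= (z^2)^m).
      { rewrite <- pow_mult. split. apply pow_le; lra.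
        replace (2*m+2)%nat with (2*m + 2)%nat by lia. rewrite pow_add.
        assert (0 <= z^(2*m)) by (apply pow_le; lra).
        assert (z^2 <= 1) by nra. nra. }
      rewrite Rabs_pos_eq by (apply Rmult_le_pos; [apply Rmult_le_pos|]; lra).
      assert (0 <= (z^2)^m) by lra.
      apply (Rle_trans _ ((z^2)^m * 1 * dlambda 2)).
      { apply Rmult_le_compat. apply Rmult_le_pos; lra. lra. apply Rmult_le_compat; lra. lra. }
      right; ring.
    - eexists. apply is_series_mult_l, is_series_geom. rewrite Rabs_pos_eq by apply pow2_ge_0. nra. }
  destruct (swap_series a C (Series C) Ha Hc (Series_correct _ HexC)) as [_ Hsw].
  set (TC := Series C) in *.
  assert (HL : logC (S q) (z/2) = -2 * (z/2)^q * TC).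
  { unfold logC. replace (S q - 1)%nat with q by lia.
    rewrite (Series_ext _ (fun k => -2 * (z/2)^q * Series (a k))).
    - apply is_series_unique. apply is_series_mult_l. exact Hsw.
    - intros k. cbv zeta. replace (2 * (z/2) / INR (2*k+1)) with (z / INR (2*k+1)) by (field; rewrite plus_INR, mult_INR; simpl; pose proof (pos_INR k); apply Rgt_not_eq; lra).
      rewrite LHS_term; auto. }
  assert (HS1 := S1_series z Hz).
  assert (Hq : 1 <= INR q) by (apply (le_INR 1); lia).
  assert (HT2 : is_series (fun n => dlambda (2 * (n + 1)) / (INR (n + 1) * INR (2 * (n + 1) + S q - 1))
           * z ^ (2 * (n + 1))) (/ INR q * (PSeries pco z + -2 * TC))).
  { pose proof (is_series_mult_l (/ INR q) _ _ (is_series_add _ _ _ _ HS1 (is_series_mult_l (-2) _ _ (Series_correct _ HexC)))) as H.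
    eapply is_series_ext_R; [|exact H]. intros m. cbv beta. unfold C, hco.
    replace (2*m+2)%nat with (2*(m+1))%nat by lia.
    replace (2 * (m + 1) + S q - 1)%nat with (S q + 1 + 2*m)%nat by lia.
    set (L := dlambda (2*(m+1))). set (P := z^(2*(m+1))).
    rewrite !plus_INR, mult_INR, S_INR. pose proof (pos_INR m).
    replace (INR 2) with 2 by (simpl; lra). replace (INR 1) with 1 by (simpl; lra).
    rewrite !S_INR, ?INR_0 in *. field. repeat split; apply Rgt_not_eq; lra. }
  rewrite HL, ln_cos_pseries by lra. rewrite (is_series_unique _ _ HT2).
  field. apply Rgt_not_eq; lra.
Qed.
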